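(* Let $H$ be a $3$-tournament on $n$ vertices and let $C=v_1b_1v_2b_2\dots v_nb_nv_1$ be a Hamiltonian cycle of $H$. Then every pair $\{v_i,v_j\}$ of vertices that are not consecutive on $C$ (i.e. $j\not\equiv i\pm 1 \pmod n$) is contained in the vertex sets of at most four of the hyperarcs $b_1,\dots,b_n$. Moreover: (a) if $n=8$, there are at most two non-consecutive pairs each contained in four hyperarcs of $C$; (b) if $n=7$, there are no two non-consecutive pairs each contained in four hyperarcs of $C$, and there are at most two non-consecutive pairs each contained in at least three hyperarcs of $C$; furthermore, if there is one non-consecutive pair contained in four hyperarcs of $C$ and another contained in three hyperarcs of $C$, then every other non-consecutive pair is contained in at most one hyperarc of $C$.
   Context: For $2\le k\le n$, a $k$-tournament $H$ on $n$ vertices is a pair $(V,A)$ where $V$ is a set of $n$ vertices and $A$ is a set of $k$-tuples of distinct vertices (hyperarcs) such that for every $k$-subset $S\subseteq V$, $A$ contains exactly one of the $k!$ orderings of $S$. For a hyperarc $a=(x_1x_2\dots x_k)$ we say $x_i$ precedes $x_j$ (written $x_i a x_j$) if $i<j$. A cycle of length $m$ in $H$ is an alternating sequence $x_1a_1x_2a_2\dots x_ma_mx_1$ of distinct vertices $x_i$ and distinct hyperarcs $a_j$ such that $x_i a_i x_{i+1}$ for all $i$ (indices mod $m$); it is Hamiltonian if it contains all vertices. A pair of vertices is contained in a hyperarc if both vertices belong to the vertex set of that hyperarc; ''hyperarcs of $C$'' means $b_1,\dots,b_n$. *)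

(* Defs.v *)
From mathcomp Require Import all_boot.
Set Implicit Arguments. Unset Strict Implicit. Unset Printing Implicit Defensive.

Definition harc (V : finType) := (V * V * V)%type.

Definition h1 (V : finType) (a : harc V) : V := a.1.1.
Definition h2 (V : finType) (a : harc V) : V := a.1.2.
Definition h3 (V : finType) (a : harc V) : V := a.2.

Definition hverts (V : finType) (a : harc V) : {set V} :=
  [set h1 a; h2 a; h3 a].

Definition harc_distinct (V : finType) (a : harc V) : bool :=
  [&& h1 a != h2 a, h1 a != h3 a & h2 a != h3 a].

Definition hprec (V : finType) (x : V) (a : harc V) (y : V) : bool :=
  [|| (x == h1 a) && (y == h2 a),
      (x == h1 a) && (y == h3 a) |
      (x == h2 a) && (y == h3 a)].

Definition tournament3 (V : finType) (A : {set harc V}) : Prop :=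
  (forall a, a \in A -> harc_distinct a) /\
  (forall S : {set V}, #|S| = 3 ->
     #|[set a in A | hverts a == S]| = 1).

Definition ham_cycle (V : finType) (n : nat) (A : {set harc V})
  (v : 'I_n -> V) (b : 'I_n -> harc V) : Prop :=
  [/\ #|V| = n, injective v, injective b,
      (forall k, b k \in A) &
      (forall k, hprec (v k) (b k) (v (ordS k)))].

Definition noncons (n : nat) (i j : 'I_n) : bool :=
  [&& i != j, j != ordS i & i != ordS j].

Definition pcount (V : finType) (n : nat) (v : 'I_n -> V)
  (b : 'I_n -> harc V) (i j : 'I_n) : nat :=
  #|[set k : 'I_n | (v i \in hverts (b k)) && (v j \in hverts (b k))]|.

Definition ncpairs (n : nat) : {set 'I_n * 'I_n} :=
  [set p : 'I_n * 'I_n | (p.1 < p.2)%N && noncons p.1 p.2].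

(* Main.v *)
Require Import Defs.
From mathcomp Require Import all_boot.
From mathcomp Require Import zify.
Set Implicit Arguments. Unset Strict Implicit. Unset Printing Implicit Defensive.

Definition T3 n (w : 'I_n -> 'I_n) (k : 'I_n) : seq 'I_n := [:: k; ordS k; w k].
Definition okw n (k a : 'I_n) := (a != k) && (a != ordS k).

Lemma ordS_neq n (k : 'I_n) : 1 < n -> ordS k != k.
Proof.
move=> n1; apply/eqP => /(congr1 val) /=; case: k => m /= lt.
have [lt1|ge1] := ltnP m.+1 n; first by rewrite modn_small //; lia.
have e : m.+1 = n by lia.
by rewrite e modnn; lia.
Qed.

Lemma setup V n (A : {set harc V}) v b : 3 <= n -> tournament3 A -> ham_cycle A v b ->
  exists w : 'I_n -> 'I_n,
   [/\ forall k, okw k (w k),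
       forall k x, (v x \in hverts (b k)) = (x \in T3 w k) &
       forall k, ~~ ((w k == ordS (ordS k)) && (w (ordS k) == k))].
Proof.
move=> n3 [Hd Ht] [Hn vinj binj bA hp].
have vbij : bijective v by apply: inj_card_bij vinj _; rewrite card_ord Hn.
case: vbij => vi vK viK.
have n1 : 1 < n by lia.
have hpm k : (v k \in hverts (b k)) && (v (ordS k) \in hverts (b k)).
  move: (hp k); rewrite /hprec /hverts !inE.
  by case/or3P => /andP[/eqP-> /eqP->]; rewrite !eqxx ?orbT.
have card3 k : #|hverts (b k)| = 3.
  have := Hd _ (bA k); rewrite /harc_distinct => /and3P[e12 e13 e23].
  rewrite (@eq_card _ _ (mem [:: h1 (b k); h2 (b k); h3 (b k)])); last first.
    by move=> x; rewrite /hverts !inE orbA.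
  by apply/card_uniqP; rewrite /= !inE negb_or e12 e13 e23.
have Hex k : exists x, [&& v x \in hverts (b k), x != k & x != ordS k].
  have /andP[i1 i2] := hpm k.
  have nk : v (ordS k) != v k by rewrite (inj_eq vinj) ordS_neq.
  have : 0 < #|hverts (b k) :\ v k :\ v (ordS k)|.
    move: (card3 k); rewrite (cardsD1 (v k)) i1 (cardsD1 (v (ordS k)) (hverts (b k) :\ v k)) in_setD1 nk i2 /=.
    by rewrite !add1n => -[] ->.
  case/card_gt0P => y; rewrite !in_setD1 => /andP[y1 /andP[y2 y3]].
  exists (vi y); rewrite viK y3 /=; apply/andP; split.
    by apply: contra y2 => /eqP <-; rewrite viK.
  by apply: contra y1 => /eqP <-; rewrite viK.
pose w k := xchoose (Hex k).
have wP k : [&& v (w k) \in hverts (b k), w k != k & w k != ordS k] := xchooseP (Hex k).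
have Hw2 k x : (v x \in hverts (b k)) = (x \in T3 w k).
  have /and3P[wa wb wc] := wP k.
  have /andP[i1 i2] := hpm k.
  apply/idP/idP; last first.
    by rewrite /T3 !in_cons in_nil orbF => /or3P[] /eqP ->.
  move=> xin; apply/negPn/negP => xn.
  have U : uniq [:: v k; v (ordS k); v (w k); v x].
    rewrite -[[:: v k; _; _; _]]/(map v [:: k; ordS k; w k; x]) (map_inj_uniq vinj).
    move: xn; rewrite /T3 /= !inE !negb_or => /and3P[x1 x2 x3].
    rewrite ![x == _]eq_sym in x1 x2 x3.
    by rewrite x1 x2 x3 eq_sym (ordS_neq k n1) eq_sym wb eq_sym wc.
  have := @subset_leq_card _ (mem [:: v k; v (ordS k); v (w k); v x]) (mem (hverts (b k))).
  have /card_uniqP cU := U; rewrite card3 cU /=.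
  have -> : [:: v k; v (ordS k); v (w k); v x] \subset hverts (b k); last by move/(_ isT).
  by apply/subsetP => y; rewrite !in_cons in_nil orbF => /or4P[] /eqP ->.
exists w; split => //.
  by move=> k; rewrite /okw; have /and3P[_ -> ->] := wP k.
move=> k; apply/negP => /andP[/eqP e1 /eqP e2].
have eqS : hverts (b k) = hverts (b (ordS k)).
  apply/setP => y; rewrite -(viK y) !Hw2 /T3 !inE e1 e2.
  by case: (vi y == k); case: (vi y == ordS k); rewrite ?orbT ?orbF.
have := Ht _ (card3 k).
move/eq_leq/card_le1_eqP => H.
have : b k = b (ordS k).
  by apply: H; rewrite !inE ?bA ?eqS eqxx.
move/binj/eqP; rewrite eq_sym; apply/negP; exact: ordS_neq.
Qed.

Definition Sw n (w : 'I_n -> 'I_n) (i j : 'I_n) : {set 'I_n} :=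
  [set k | (i \in T3 w k) && (j \in T3 w k)].

Lemma Sw_sub n (w : 'I_n -> 'I_n) i j : noncons i j ->
  {subset Sw w i j <= [:: ord_pred i; i; ord_pred j; j]}.
Proof.
case/and3P => nij nj ni k; rewrite inE /T3 !in_cons in_nil !orbF.
case/andP => /or3P[/eqP ei|/eqP ei|/eqP ei].
- by rewrite ei eqxx orbT.
- by rewrite ei ordSK eqxx.
case/or3P => [/eqP ej|/eqP ej|/eqP ej].
- by rewrite ej eqxx !orbT.
- by rewrite ej ordSK eqxx !orbT.
by move: nij; rewrite ei ej eqxx.
Qed.

Lemma Sw_le4 n (w : 'I_n -> 'I_n) i j : noncons i j -> #|Sw w i j| <= 4.
Proof.
move=> nc.
have h : Sw w i j \subset mem [:: ord_pred i; i; ord_pred j; j].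
  by apply/subsetP; apply: Sw_sub.
exact: leq_trans (subset_leq_card h) (card_size _).
Qed.

Lemma noncons_sym n (i j : 'I_n) : noncons i j -> noncons j i.
Proof. by case/and3P => a b c; rewrite /noncons eq_sym a c b. Qed.

Lemma Sw_sym n (w : 'I_n -> 'I_n) i j : Sw w i j = Sw w j i.
Proof. by apply/setP => k; rewrite !inE andbC. Qed.

Lemma half n (w : 'I_n -> 'I_n) i j : noncons i j ->
  i \in Sw w i j -> ord_pred i \in Sw w i j -> w i = j /\ w (ord_pred i) = j.
Proof.
case/and3P => nij nj ni; rewrite /Sw /T3 !inE.
case/andP => _ /or3P[/eqP e|/eqP e|/eqP e]; first by move: nij; rewrite e eqxx.
  by move: nj; rewrite e eqxx.
case/andP => _ /or3P[/eqP e'|/eqP e'|/eqP e'].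
- by move: ni; rewrite e' ord_predK eqxx.
- by move: nij; rewrite e' ord_predK eqxx.
by [].
Qed.

Lemma full n (w : 'I_n -> 'I_n) i j : noncons i j -> #|Sw w i j| = 4 ->
  [/\ w i = j, w (ord_pred i) = j, w j = i & w (ord_pred j) = i].
Proof.
move=> nc c4.
have E : Sw w i j =i [:: ord_pred i; i; ord_pred j; j].
  apply/subset_cardP; last by apply/subsetP; apply: Sw_sub.
  have cL : #|[:: ord_pred i; i; ord_pred j; j]| <= 4 := card_size _.
  apply/eqP; rewrite eqn_leq c4 cL /= -c4 andbT.
  by apply: subset_leq_card; apply/subsetP; apply: Sw_sub.
have m1 : i \in Sw w i j by rewrite E !inE eqxx !orbT.
have m2 : ord_pred i \in Sw w i j by rewrite E !inE eqxx.
have m3 : j \in Sw w j i by rewrite Sw_sym E !inE eqxx !orbT.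
have m4 : ord_pred j \in Sw w j i by rewrite Sw_sym E !inE eqxx !orbT.
have [h1 h2] := half nc m1 m2.
have [h3 h4] := half (noncons_sym nc) m3 m4.
by split.
Qed.

Lemma quarter n (w : 'I_n -> 'I_n) (P : {set 'I_n * 'I_n}) : 1 < n ->
  (forall p, p \in P -> [/\ (p.1 < p.2)%N, w p.1 = p.2, w p.2 = p.1,
       w (ord_pred p.1) = p.2 & w (ord_pred p.2) = p.1]) -> 4 * #|P| <= n.
Proof.
move=> n1 HP.
pose X := [set x | (w (w x) == x) && (w (ord_pred x) == w x)].
have HX : #|X| + #|X| <= n.
  rewrite -{2}(card_imset X (@ord_pred_inj n)) -cardsUI.
  have -> : X :&: [set ord_pred x | x in X] = set0.
    apply/setP => y; rewrite !inE; apply/negP => /andP[/andP[/eqP y1 /eqP y2]].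
    case/imsetP => x; rewrite inE => /andP[/eqP x1 /eqP x2] ey.
    have : y = x by rewrite -y1 -x1 -x2 ey.
    move=> exy; move: (ordS_neq x n1); rewrite -{1}exy ey ord_predK eqxx //.
  by rewrite cards0 addn0; apply: leq_trans (max_card _) _; rewrite card_ord.
have HF : #|[set p.1 | p in P]| = #|P|.
  apply: card_in_imset => p q pP qP e.
  have [_ a _ _ _] := HP p pP; have [_ c _ _ _] := HP q qP.
  by move: a c; case: p q e {pP qP} => [p1 p2] [q1 q2] /= -> <- <-.
have HG : #|[set p.2 | p in P]| = #|P|.
  apply: card_in_imset => p q pP qP e.
  have [_ _ a _ _] := HP p pP; have [_ _ c _ _] := HP q qP.
  by move: a c; case: p q e {pP qP} => [p1 p2] [q1 q2] /= -> <- <-.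
have HFG : [set p.1 | p in P] :&: [set p.2 | p in P] = set0.
  apply/setP => y; rewrite !inE; apply/negP => /andP[/imsetP[p pP ->] /imsetP[q qP e]].
  have [l1 a1 a2 _ _] := HP p pP; have [l2 b1 b2 _ _] := HP q qP.
  have e2 : q.1 = p.2 by rewrite -b2 -e a1.
  by move: l2; rewrite e2 -e => l2; move: (ltn_trans l1 l2); rewrite ltnn.
have sub : [set p.1 | p in P] :|: [set p.2 | p in P] \subset X.
  apply/subsetP => y; rewrite !inE => /orP[] /imsetP[p pP ->];
   have [_ a1 a2 a3 a4] := HP p pP.
  - by rewrite a1 a2 a3 !eqxx.
  - by rewrite a2 a1 a4 !eqxx.
have := subset_leq_card sub; have := cardsUI [set p.1 | p in P] [set p.2 | p in P]; rewrite HFG cards0 addn0 HF HG => ->.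
by move=> h; lia.
Qed.

Lemma card_formula n (w : 'I_n -> 'I_n) i j : 1 < n -> noncons i j ->
  #|Sw w i j| = (w (ord_pred i) == j) + ((w i == j) + ((w (ord_pred j) == i) + (w j == i))).
Proof.
move=> n1 nc; have /and3P[nij nj ni] := nc.
set L := [:: ord_pred i; i; ord_pred j; j].
have pn (k : 'I_n) : ord_pred k != k.
  by apply/eqP => e; move: (ordS_neq k n1); rewrite -{1}e ord_predK eqxx.
have uL : uniq L.
  rewrite /L /= !inE !negb_or (inj_eq (@ord_pred_inj n)) nij pn pn /=.
  rewrite !andbT; apply/andP; split.
  - by apply/eqP => e; move: ni; rewrite -e ord_predK eqxx.
  - by apply/eqP => e; move: nj; rewrite e ord_predK eqxx.
have -> : #|Sw w i j| = count (mem (Sw w i j)) L.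
  have /card_uniqP cF := filter_uniq (mem (Sw w i j)) uL.
  rewrite -size_filter -cF.
  apply: eq_card => x; rewrite mem_filter.
  apply/idP/andP => [xS|[] //]; split => //; exact: Sw_sub nc x xS.
have jpi : (j == ord_pred i) = false.
  by apply/eqP => e; move: ni; rewrite e ord_predK eqxx.
have ipj : (i == ord_pred j) = false.
  by apply/eqP => e; move: nj; rewrite e ord_predK eqxx.
have ij : (i == j) = false by apply/negbTE.
have ji : (j == i) = false by rewrite eq_sym.
have e1 : (ord_pred i \in Sw w i j) = (w (ord_pred i) == j).
  by rewrite /Sw inE /T3 !inE ord_predK eqxx jpi ji !orbT /= eq_sym.
have e2 : (i \in Sw w i j) = (w i == j).
  by rewrite /Sw inE /T3 !inE eqxx ji (negbTE nj) /= eq_sym.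
have e3 : (ord_pred j \in Sw w i j) = (w (ord_pred j) == i).
  by rewrite /Sw inE /T3 !inE ord_predK ipj ij eqxx !orbT /= ?andbT eq_sym.
have e4 : (j \in Sw w i j) = (w j == i).
  by rewrite /Sw inE /T3 !inE ij (negbTE ni) eqxx /= andbT eq_sym.
by rewrite /L /= addn0 e1 e2 e3 e4.
Qed.

Definition succ7 (k : nat) := if k == 6 then 0 else k.+1.
Definition pred7 (k : nat) := if k == 0 then 6 else k.-1.
Definition cntF (ws : seq nat) (p : nat * nat) :=
  (nth 0 ws (pred7 p.1) == p.2) + ((nth 0 ws p.1 == p.2) +
  ((nth 0 ws (pred7 p.2) == p.1) + (nth 0 ws p.2 == p.1))).
Definition PL : seq (nat * nat) := [:: (0,2); (0,3); (0,4); (0,5); (1,3); (1,4); (1,5); (1,6); (2,4); (2,5); (2,6); (3,5); (3,6); (4,6)].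
Definition goodcs (cs : seq nat) :=
  (count (leq 3) cs <= 2) &&
  ((4 \in cs) && (3 \in cs) ==> (count (leq 2) cs <= 2)).
Definition good7n ws := goodcs (map (cntF ws) PL).
Definition okn k a := (a != k) && (a != succ7 k).
Definition validn (ws : seq nat) :=
  all (fun k => ~~ ((nth 0 ws k == succ7 (succ7 k)) && (nth 0 ws (succ7 k) == k))) (iota 0 7).
Definition chk7 :=
  all (fun a0 => if okn 0 a0 then
  all (fun a1 => if okn 1 a1 then
  all (fun a2 => if okn 2 a2 then
  all (fun a3 => if okn 3 a3 then
  all (fun a4 => if okn 4 a4 then
  all (fun a5 => if okn 5 a5 then
  all (fun a6 => if okn 6 a6 then
     if validn [:: a0; a1; a2; a3; a4; a5; a6] then good7n [:: a0; a1; a2; a3; a4; a5; a6] else true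
  else true) (iota 0 7) else true) (iota 0 7) else true) (iota 0 7) else true) (iota 0 7)
  else true) (iota 0 7) else true) (iota 0 7) else true) (iota 0 7).
Lemma chk7_ok : chk7 = true. Proof. vm_compute. reflexivity. Qed.

Lemma chk7_use a0 a1 a2 a3 a4 a5 a6 :
  a0 < 7 -> a1 < 7 -> a2 < 7 -> a3 < 7 -> a4 < 7 -> a5 < 7 -> a6 < 7 ->
  okn 0 a0 -> okn 1 a1 -> okn 2 a2 -> okn 3 a3 -> okn 4 a4 -> okn 5 a5 -> okn 6 a6 ->
  validn [:: a0; a1; a2; a3; a4; a5; a6] -> good7n [:: a0; a1; a2; a3; a4; a5; a6].
Proof.
move=> h0 h1 h2 h3 h4 h5 h6 k0 k1 k2 k3 k4 k5 k6 V.
have := chk7_ok; rewrite /chk7.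
move=> /allP /(_ a0); rewrite mem_iota h0 k0 => /(_ isT).
move=> /allP /(_ a1); rewrite mem_iota h1 k1 => /(_ isT).
move=> /allP /(_ a2); rewrite mem_iota h2 k2 => /(_ isT).
move=> /allP /(_ a3); rewrite mem_iota h3 k3 => /(_ isT).
move=> /allP /(_ a4); rewrite mem_iota h4 k4 => /(_ isT).
move=> /allP /(_ a5); rewrite mem_iota h5 k5 => /(_ isT).
move=> /allP /(_ a6); rewrite mem_iota h6 k6 => /(_ isT).
by rewrite V.
Qed.

Definition I7o : seq 'I_7 := [:: (@Ordinal 7 0 isT); (@Ordinal 7 1 isT); (@Ordinal 7 2 isT); (@Ordinal 7 3 isT); (@Ordinal 7 4 isT); (@Ordinal 7 5 isT); (@Ordinal 7 6 isT)].

Lemma memI7 (k : 'I_7) : k \in I7o.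
Proof. by case: k => [[|[|[|[|[|[|[|m]]]]]]] H]. Qed.

Lemma card_list (T : finType) (s : seq T) (A : {pred T}) :
  uniq s -> (forall x, x \in s) -> #|A| = count (mem A) s.
Proof.
move=> us alls; rewrite cardE /enum_mem size_filter -enumT.
apply/permP; apply: uniq_perm => //; first exact: enum_uniq.
by move=> x; rewrite mem_enum alls.
Qed.

Definition allp7 : seq ('I_7 * 'I_7) := [seq (x, y) | x <- I7o, y <- I7o].
Definition pl7o : seq ('I_7 * 'I_7) :=
  [seq p : 'I_7 * 'I_7 <- allp7 | (p.1 < p.2)%N && noncons p.1 p.2].

Lemma allp7_uniq : uniq allp7. Proof. by vm_compute. Qed.
Lemma allp7_all x : x \in allp7.
Proof. case: x => x y; apply: allpairs_f; exact: memI7. Qed.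
Lemma pl7o_uniq : uniq pl7o. Proof. exact: filter_uniq allp7_uniq. Qed.
Lemma pl7o_mem p : (p \in pl7o) = (p \in ncpairs 7).
Proof. by rewrite mem_filter allp7_all andbT inE. Qed.
Lemma pl7o_PL : [seq (val p.1, val p.2) | p <- pl7o] = PL.
Proof. by vm_compute. Qed.

Lemma card_nc7 (P : pred ('I_7 * 'I_7)) :
  #|[set p in ncpairs 7 | P p]| = count P pl7o.
Proof.
rewrite (card_list _ allp7_uniq allp7_all) /pl7o count_filter.
by apply: eq_count => p; rewrite !inE andbC.
Qed.

Lemma three (T : eqType) (s : seq T) (a : pred T) x y z :
  uniq s -> x \in s -> y \in s -> z \in s -> x != y -> x != z -> y != z ->
  a x -> a y -> a z -> 3 <= count a s.
Proof.
move=> us xs ys zs xy xz yz ax ay az; rewrite -size_filter.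
apply: (uniq_leq_size (s1 := [:: x; y; z])).
  by rewrite /= !inE negb_or xy xz yz.
by move=> t; rewrite !inE => /or3P[] /eqP ->; rewrite mem_filter ?ax ?ay ?az.
Qed.

Lemma seven (w : 'I_7 -> 'I_7) : (forall k, okw k (w k)) ->
  (forall k, ~~ ((w k == ordS (ordS k)) && (w (ordS k) == k))) ->
  (#|[set p in ncpairs 7 | 3 <= #|Sw w p.1 p.2| ]| <= 2) /\
  (forall p q r, p \in ncpairs 7 -> q \in ncpairs 7 -> r \in ncpairs 7 ->
     #|Sw w p.1 p.2| = 4 -> #|Sw w q.1 q.2| = 3 -> r != p -> r != q ->
     #|Sw w r.1 r.2| <= 1).
Proof.
move=> Hok Hv.
pose ws := [:: val (w (@Ordinal 7 0 isT)); val (w (@Ordinal 7 1 isT)); val (w (@Ordinal 7 2 isT)); val (w (@Ordinal 7 3 isT)); val (w (@Ordinal 7 4 isT)); val (w (@Ordinal 7 5 isT)); val (w (@Ordinal 7 6 isT))].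
have G : good7n ws.
  apply: chk7_use; try exact: ltn_ord.
  - exact: Hok.
  - exact: Hok.
  - exact: Hok.
  - exact: Hok.
  - exact: Hok.
  - exact: Hok.
  - exact: Hok.
  have eS0 : ordS (@Ordinal 7 0 isT) = (@Ordinal 7 1 isT) by apply: val_inj.
  have eS1 : ordS (@Ordinal 7 1 isT) = (@Ordinal 7 2 isT) by apply: val_inj.
  have eS2 : ordS (@Ordinal 7 2 isT) = (@Ordinal 7 3 isT) by apply: val_inj.
  have eS3 : ordS (@Ordinal 7 3 isT) = (@Ordinal 7 4 isT) by apply: val_inj.
  have eS4 : ordS (@Ordinal 7 4 isT) = (@Ordinal 7 5 isT) by apply: val_inj.
  have eS5 : ordS (@Ordinal 7 5 isT) = (@Ordinal 7 6 isT) by apply: val_inj.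
  have eS6 : ordS (@Ordinal 7 6 isT) = (@Ordinal 7 0 isT) by apply: val_inj.
  have V0 := Hv (@Ordinal 7 0 isT); rewrite ?eS0 ?eS1 in V0.
  have V1 := Hv (@Ordinal 7 1 isT); rewrite ?eS1 ?eS2 in V1.
  have V2 := Hv (@Ordinal 7 2 isT); rewrite ?eS2 ?eS3 in V2.
  have V3 := Hv (@Ordinal 7 3 isT); rewrite ?eS3 ?eS4 in V3.
  have V4 := Hv (@Ordinal 7 4 isT); rewrite ?eS4 ?eS5 in V4.
  have V5 := Hv (@Ordinal 7 5 isT); rewrite ?eS5 ?eS6 in V5.
  have V6 := Hv (@Ordinal 7 6 isT); rewrite ?eS6 ?eS0 in V6.
  rewrite /validn /=.
  by rewrite (negbTE V0) (negbTE V1) (negbTE V2) (negbTE V3) (negbTE V4) (negbTE V5) (negbTE V6).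
have wv : forall k : 'I_7, val (w k) = nth 0 ws (val k).
  case=> m H.
  do 7! (case: m H => [|m] H; first by congr (val (w _)); apply: val_inj).
  by [].
have vp : forall k : 'I_7, val (ord_pred k) = pred7 (val k).
  case=> m H.
  do 7! (case: m H => [|m] H; first by []).
  by [].
have csE : map (cntF ws) PL = [seq #|Sw w p.1 p.2| | p <- pl7o].
  rewrite -pl7o_PL -map_comp; apply/eq_in_map => p.
  rewrite pl7o_mem inE => /andP[_ nc].
  rewrite (card_formula _ _ nc) //= /cntF /= -!vp -!wv.
  by [].
move: G; rewrite /good7n /goodcs csE => /andP[G1 G2].
split.
  by rewrite card_nc7; rewrite count_map in G1.
move=> p q r pP qP rP c4 c3 rp rq.
rewrite -pl7o_mem in pP; rewrite -pl7o_mem in qP; rewrite -pl7o_mem in rP.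
have m4 := map_f (fun p => #|Sw w p.1 p.2|) pP; rewrite /= c4 in m4.
have m3 := map_f (fun p => #|Sw w p.1 p.2|) qP; rewrite /= c3 in m3.
rewrite m4 m3 andbT implyTb in G2.
rewrite leqNgt; apply/negP => c2.
have pq : p != q by apply/eqP => epq; move: c4; rewrite epq c3.
have := three (a := fun p => 2 <= #|Sw w p.1 p.2|) pl7o_uniq pP qP rP pq.
rewrite eq_sym rp eq_sym rq c4 c3 => /(_ isT isT isT isT c2).
rewrite count_map in G2; move: G2.
by case: (count _ _) => [|[|[|]]].
Qed.

Unset Implicit Arguments.
Set Strict Implicit.

Theorem lemma2 (V : finType) (n : nat) (A : {set harc V})
  (v : 'I_n -> V) (b : 'I_n -> harc V) :
  (3 <= n)%N ->
  tournament3 A ->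
  ham_cycle A v b ->
  (forall i j : 'I_n, noncons i j -> (pcount v b i j <= 4)%N) /\
  (n = 8 ->
     (#|[set p in ncpairs n | pcount v b p.1 p.2 == 4]| <= 2)%N) /\
  (n = 7 ->
     [/\ (#|[set p in ncpairs n | pcount v b p.1 p.2 == 4]| <= 1)%N,
         (#|[set p in ncpairs n | 3 <= pcount v b p.1 p.2]| <= 2)%N &
         (forall p q r, p \in ncpairs n -> q \in ncpairs n -> r \in ncpairs n ->
            pcount v b p.1 p.2 = 4 -> pcount v b q.1 q.2 = 3 ->
            r != p -> r != q -> (pcount v b r.1 r.2 <= 1)%N)]).
Proof.
move=> n3 Ht Hc.
have [w [Hok Hw2 Hw3]] := setup n3 Ht Hc.
have n1 : 1 < n by lia.
have pcE : forall i j, pcount v b i j = #|Sw w i j|.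
  move=> i j; rewrite /pcount.
  have e : [set k | (v i \in hverts (b k)) && (v j \in hverts (b k))] = Sw w i j.
    by rewrite /Sw; apply: eq_finset => k; rewrite !Hw2.
  by rewrite e.
have Q : 4 * #|[set p in ncpairs n | pcount v b p.1 p.2 == 4]| <= n.
  apply: (@quarter n w) => // p; rewrite !inE => /andP[/andP[lt nc] /eqP c4].
  rewrite pcE in c4.
  by have [a1 a2 a3 a4] := full nc c4; split.
split.
  by move=> i j nc; rewrite pcE; exact: Sw_le4.
split.
  by move=> e; lia.
move=> e; split; first by lia.
  move: Q; subst n => _.
  have [S1 _] := seven Hok Hw3.
  rewrite (_ : [set p in ncpairs 7 | 3 <= pcount v b p.1 p.2] =
               [set p in ncpairs 7 | 3 <= #|Sw w p.1 p.2| ]) //.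
  by apply/setP => p; rewrite !inE pcE.
subst n.
have [_ S2] := seven Hok Hw3.
move=> p q r pP qP rP; rewrite !pcE; exact: S2.
Qed.
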